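(* Let $\mathcal B=(\mathcal T,A,p,c)$ be a BMDP. For every list $\alpha\in\mathcal T^*$ of types, $\mathrm{ETotal}_*(\alpha)=\sum_{i=1}^{|\alpha|}\mathrm{ETotal}_*(\alpha_i)$ (in $[0,\infty]$). Moreover, for every $q\in\mathcal T$, $\mathrm{ETotal}_*(q)=\min_{a\in A(q)}\Big(c(q,a)+\sum_{\alpha\in\mathcal T^*}p(q,a)(\alpha)\sum_{i=1}^{|\alpha|}\mathrm{ETotal}_*(\alpha_i)\Big)$.
   Context: A branching Markov decision process (BMDP) is a tuple $\mathcal B=(\mathcal T,A,p,c)$ where $\mathcal T$ is a finite set of types, $A$ is a finite set of actions, $p:\mathcal T\times A\to \mathrm{Dist}(\mathcal T^* )$ is a partial function assigning to some pairs $(q,a)$ a probability distribution with finite support over the set $\mathcal T^*$ of finite lists of types, and $c:\mathcal T\times A\to\mathbb R_{>0}$ is a cost function with strictly positive values. $A(q)$ denotes the (nonempty) set of actions $a$ for which $p(q,a)$ is defined. For a list $\alpha$, $|\alpha|$ is its length and $\alpha_i$ its $i$-th element; $\varepsilon$ is the empty list. Semantics: the BMDP induces an MDP whose states are lists $\alpha\in\mathcal T^*$. In state $\alpha$ the enabled actions are pairs $(i,a)$ with $1\le i\le|\alpha|$ and $a\in A(\alpha_i)$; taking $(i,a)$ incurs cost $c(\alpha_i,a)$ and moves to $\alpha_1\cdots\alpha_{i-1}\cdot\beta\cdot\alpha_{i+1}\cdots\alpha_{|\alpha|}$ with probability $p(\alpha_i,a)(\beta)$. The state $\varepsilon$ has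 no actions and is absorbing with no further cost. A strategy maps each finite history to a probability distribution over actions enabled in its last state; a strategy $\sigma$ and initial state $\alpha$ induce a probability measure on runs. $\mathrm{ETotal}_N(\alpha,\sigma)$ is the expected sum of costs in the first $N$ steps, $\mathrm{ETotal}_*(\alpha,\sigma)=\lim_{N\to\infty}\mathrm{ETotal}_N(\alpha,\sigma)\in[0,\infty]$, and $\mathrm{ETotal}_*(\alpha)=\inf_\sigma\mathrm{ETotal}_*(\alpha,\sigma)$ over all strategies. Conventions $0\cdot\infty=0$, $r+\infty=\infty$. *)

(* Defs.v *)
From HB Require Import structures.
From mathcomp Require Import all_boot all_order all_algebra.
From mathcomp Require Import all_classical all_reals ereal.
Set Implicit Arguments. Unset Strict Implicit. Unset Printing Implicit Defensive.
Import Order.TTheory GRing.Theory Num.Theory.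
Local Open Scope ring_scope.

Record findist (R : realType) (X : eqType) := FinDist {
  fd_supp : seq X;
  fd_w : X -> R;
  fd_uniq : uniq fd_supp;
  fd_ge0 : forall x, 0 <= fd_w x;
  fd_out : forall x, x \notin fd_supp -> fd_w x = 0;
  fd_sum1 : \sum_(x <- fd_supp) fd_w x = 1 }.

(* A branching MDP (T, Act, p, c): p is a partial function (None = undefined),
   c has strictly positive values, and A(q) is nonempty for all q. *)
Record BMDP (R : realType) (T Act : finType) := MkBMDP {
  bp : T -> Act -> option (findist R (seq T));
  bc : T -> Act -> R;
  bc_pos : forall q a, 0 < bc q a;
  bA_nonempty : forall q, exists a, isSome (bp q a) }.

Section Semantics.
Variables (R : realType) (T Act : finType) (B : BMDP R T Act).

Definition elt (alpha : seq T) (i : 'I_(size alpha)) : T := tnth (in_tuple alpha) i.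

Definition replace_at (alpha : seq T) (i : nat) (beta : seq T) : seq T :=
  take i alpha ++ beta ++ drop i.+1 alpha.

(* Actions of the induced MDP: (i, a) with i a 0-indexed position. *)
Definition mact := (nat * Act)%type.

(* A finite history: initial state followed by the (action, state) steps. *)
Definition hist := (seq T * seq (mact * seq T))%type.

Definition last_state (h : hist) : seq T := last h.1 [seq s.2 | s <- h.2].

Definition extend (h : hist) (m : mact) (beta : seq T) : hist :=
  (h.1, rcons h.2 (m, beta)).

Definition enabled (alpha : seq T) (m : mact) : Prop :=
  exists (i : 'I_(size alpha)), m.1 = i /\ isSome (bp B (elt i) m.2).

Definition is_strategy (sigma : hist -> mact -> R) : Prop :=
  (forall h m, 0 <= sigma h m) /\
  (forall h m, ~ enabled (last_state h) m -> sigma h m = 0) /\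
  (forall h, last_state h != [::] ->
     \sum_(i < size (last_state h)) \sum_(a : Act | isSome (bp B (elt i) a))
        sigma h (nat_of_ord i, a) = 1).

(* Expected total cost of the first N steps, starting from history h
   (this is the expectation under the measure induced by sigma on runs,
   computed by unfolding the first step). *)
Fixpoint ETotN (N : nat) (sigma : hist -> mact -> R) (h : hist) : R :=
  match N with
  | 0 => 0
  | N'.+1 =>
    let alpha := last_state h in
    \sum_(i < size alpha) \sum_(a : Act)
      match bp B (elt i) a with
      | None => 0
      | Some d =>
          sigma h (nat_of_ord i, a) *
          (bc B (elt i) a +
           \sum_(beta <- fd_supp d)
              fd_w d beta * ETotN N' sigma (extend h (nat_of_ord i, a)
                                              (replace_at alpha i beta)))
      end
  end.

Definition ETotal_N (N : nat) (alpha : seq T) (sigma : hist -> mact -> R) : R :=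
  ETotN N sigma (alpha, [::]).

(* ETotal_*(alpha, sigma) = lim_N ETotal_N (nondecreasing in N, so = sup) *)
Definition ETotal_star_strat (alpha : seq T) (sigma : hist -> mact -> R) : \bar R :=
  ereal_sup [set (ETotal_N N alpha sigma)%:E | N in [set: nat]].

Definition ETotal_star (alpha : seq T) : \bar R :=
  ereal_inf [set ETotal_star_strat alpha sigma | sigma in is_strategy].

(* c(q,a) + sum_beta p(q,a)(beta) * sum_i ETotal_*(beta_i), for a in A(q);
   +oo for a not in A(q) (neutral for the min below). *)
Definition bellman_val (q : T) (a : Act) : \bar R :=
  match bp B q a with
  | None => +oo%E
  | Some d =>
    ((bc B q a)%:E +
     \sum_(beta <- fd_supp d)
        ((fd_w d beta)%:E * \sum_(i < size beta) ETotal_star [:: elt i]))%E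
  end.

End Semantics.

(* Main.v *)
Require Import Defs.
From HB Require Import structures.
From mathcomp Require Import all_boot all_order all_algebra.
From mathcomp Require Import all_classical all_reals ereal.
From mathcomp Require Import topology normedtype sequences.
From mathcomp Require Import lra.
Import Order.TTheory GRing.Theory Num.Theory.
Set Implicit Arguments. Unset Strict Implicit. Unset Printing Implicit Defensive.
Local Open Scope classical_set_scope.
Local Open Scope ring_scope.

Section Proof.
Variables (R : realType) (T Act : finType) (B : BMDP R T Act).

Definition c0 : R := \big[Order.min/1]_(x : T * Act) bc B x.1 x.2.

Lemma c0_gt0 : 0 < c0.
Proof. by apply: lt_bigmin => // x _; exact: bc_pos. Qed.

Lemma c0_le q a : c0 <= bc B q a.
Proof. exact: (bigmin_le _ (q, a) (fun x => bc B x.1 x.2)). Qed.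

Definition bmax : nat := \max_(x : T * Act)
  match bp B x.1 x.2 with Some d => \max_(b <- fd_supp d) size b | None => 0%N end.

Lemma size_le_bmax q a d b : bp B q a = Some d -> b \in fd_supp d -> (size b <= bmax)%N.
Proof.
move=> E bin.
pose F := fun x : T * Act => match bp B x.1 x.2 with Some d => \max_(b <- fd_supp d) size b | None => 0%N end.
apply: (@leq_trans (F (q, a))); last exact: (leq_bigmax (F := F) (q, a)).
rewrite /F /= E; exact: (@leq_bigmax_seq _ (fd_supp d) xpredT (fun b : seq T => size b) b bin isT).
Qed.

Definition a0 (q : T) : Act := xchoose (bA_nonempty B q).
Lemma a0P q : isSome (bp B q (a0 q)).
Proof. exact: (xchooseP (bA_nonempty B q)). Qed.

Definition bellF (f : T -> R) (q : T) (a : Act) : R :=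
  match bp B q a with
  | None => 0
  | Some d => bc B q a + \sum_(b <- fd_supp d) fd_w d b * \sum_(x <- b) f x
  end.

Fixpoint Wk (k : nat) : T -> R :=
  match k with
  | 0 => fun _ => 0
  | k'.+1 => fun q => \big[Order.min/bellF (Wk k') q (a0 q)]_(a | isSome (bp B q a))
                        bellF (Wk k') q a
  end.

Lemma bellF_ge0 f q a : (forall x, 0 <= f x) -> 0 <= bellF f q a.
Proof.
move=> f0; rewrite /bellF; case: (bp B q a) => // d.
apply: addr_ge0; first exact/ltW/bc_pos.
by apply: sumr_ge0 => b _; apply: mulr_ge0; [exact: fd_ge0| apply: sumr_ge0].
Qed.

Lemma bellF_mono f g q a : (forall x, f x <= g x) -> bellF f q a <= bellF g q a.
Proof.
move=> fg; rewrite /bellF; case: (bp B q a) => // d.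
rewrite lerD2l; apply: ler_sum => b _; apply: ler_wpM2l; first exact: fd_ge0.
exact: ler_sum.
Qed.

Lemma Wk_ge0 k x : 0 <= Wk k x.
Proof.
elim: k x => [|k IH] x //=.
apply: le_bigmin; first exact: bellF_ge0.
by move=> a _; exact: bellF_ge0.
Qed.

Lemma Wk_le_bell k q a : isSome (bp B q a) -> Wk k.+1 q <= bellF (Wk k) q a.
Proof. by move=> H; exact: bigmin_le_cond. Qed.

Lemma Wk_step k x : Wk k x <= Wk k.+1 x.
Proof.
elim: k x => [|k IH] x; first exact: Wk_ge0.
rewrite [Wk k.+2 x]/=; apply: le_bigmin.
  apply: le_trans (Wk_le_bell k (a0P x)) _; exact: bellF_mono.
move=> a Ha; apply: le_trans (Wk_le_bell k Ha) _; exact: bellF_mono.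
Qed.

Lemma Wk_mono k k' x : (k <= k')%N -> Wk k x <= Wk k' x.
Proof.
move=> kk'; apply: (homo_leq (r := fun u v : R => u <= v) (f := fun k => Wk k x)) => //.
- by move=> y u z; exact: le_trans.
- by move=> i; exact: Wk_step.
Qed.


Local Open Scope ereal_scope.

Lemma sup_cvg (u : nat -> \bar R) l :
  {homo u : n m / (n <= m)%N >-> n <= m} -> u @ \oo --> l -> ereal_sup (range u) = l.
Proof.
move=> H Hl.
rewrite -(cvg_lim _ (ereal_nondecreasing_cvgn H)) //.
exact: cvg_lim.
Qed.

Definition W (x : T) : \bar R := ereal_sup (range (fun k => (Wk k x)%:E)).

Lemma Wk_homo x : {homo (fun k => (Wk k x)%:E) : n m / (n <= m)%N >-> n <= m}.
Proof. by move=> n m nm; rewrite lee_fin; exact: Wk_mono. Qed.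

Lemma Wk_cvg x : (fun k => (Wk k x)%:E) @ \oo --> W x.
Proof. exact: ereal_nondecreasing_cvgn (Wk_homo x). Qed.

Lemma Wk_le_W k x : (Wk k x)%:E <= W x.
Proof. by apply: ereal_sup_ubound; exists k. Qed.

Lemma W_ge0 x : 0 <= W x.
Proof. exact: (le_trans _ (Wk_le_W 0 x)). Qed.

Definition bellE (f : T -> \bar R) (q : T) (a : Act) : \bar R :=
  match bp B q a with
  | None => +oo
  | Some d => (bc B q a)%:E + \sum_(b <- fd_supp d) (fd_w d b)%:E * \sum_(x <- b) f x
  end.

Lemma bellE_ge0 f q a : (forall x, 0 <= f x) -> 0 <= bellE f q a.
Proof.
move=> f0; rewrite /bellE; case: (bp B q a) => // d.
apply: adde_ge0; first by rewrite lee_fin; exact/ltW/bc_pos.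
apply: sume_ge0 => b _; apply: mule_ge0; first by rewrite lee_fin; exact: fd_ge0.
exact: sume_ge0.
Qed.

Lemma bell_cvg q a : isSome (bp B q a) ->
  (fun k => (bellF (Wk k) q a)%:E) @ \oo --> bellE W q a.
Proof.
rewrite /bellF /bellE; case: (bp B q a) => // d _.
under eq_fun do rewrite EFinD -sumEFin.
apply: cvgeD; [exact: fin_num_adde_defr | exact: cvg_cst |].
apply: cvg_nnesum.
  move=> b _; apply: nearW => k; rewrite lee_fin.
  by apply: mulr_ge0; [exact: fd_ge0 | apply: sumr_ge0 => x _; exact: Wk_ge0].
move=> b _.
under eq_fun do rewrite EFinM -sumEFin.
apply: cvgeZl => //.
apply: cvg_nnesum.
  by move=> x _; apply: nearW => k; rewrite lee_fin; exact: Wk_ge0.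
by move=> x _; exact: Wk_cvg.
Qed.

Lemma bell_sup q a : isSome (bp B q a) ->
  ereal_sup (range (fun k => (bellF (Wk k) q a)%:E)) = bellE W q a.
Proof.
move=> H; apply: sup_cvg; last exact: bell_cvg.
move=> n m nm; rewrite lee_fin; apply: bellF_mono => x; exact: Wk_mono.
Qed.

Lemma FP1 q a : isSome (bp B q a) -> W q <= bellE W q a.
Proof.
move=> H; apply: ge_ereal_sup => _ [[|k] _ <-].
  by apply: bellE_ge0; exact: W_ge0.
apply: (le_trans _ (_ : (bellF (Wk k) q a)%:E <= _)).
  by rewrite lee_fin; exact: Wk_le_bell.
by rewrite -bell_sup //; apply: ereal_sup_ubound; exists k.
Qed.

Lemma FP2 q : \big[Order.min/+oo]_(a | isSome (bp B q a)) bellE W q a <= W q.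
Proof.
rewrite leNgt; apply/negP => Hlt.
have Wfin : W q \is a fin_num.
  rewrite ge0_fin_numE ?W_ge0 //; exact: (lt_le_trans Hlt (leey _)).
have ex : forall a, exists k : nat, isSome (bp B q a) -> W q < (bellF (Wk k) q a)%:E.
  move=> a; case: (boolP (isSome (bp B q a))) => Ha; last by exists 0%N.
  have : W q < bellE W q a.
    by apply: (lt_le_trans Hlt); exact: bigmin_le_cond.
  rewrite -bell_sup // => /ereal_sup_gt [_ [k _ <-] Hk]; by exists k.
have [f Hf] := choice ex.
pose K := (\max_(a : Act) f a)%N.
have HK : forall a, isSome (bp B q a) -> W q < (bellF (Wk K) q a)%:E.
  move=> a Ha; apply: (lt_le_trans (Hf a Ha)); rewrite lee_fin.
  apply: bellF_mono => x; apply: Wk_mono; exact: leq_bigmax.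
have : W q < (Wk K.+1 q)%:E.
  rewrite -(fineK Wfin) lte_fin /=; apply: lt_bigmin.
    by rewrite -lte_fin fineK //; exact: HK (a0P q).
  by move=> a Ha; rewrite -lte_fin fineK //; exact: HK.
by rewrite ltNge Wk_le_W.
Qed.

Lemma W_fix q : W q = \big[Order.min/+oo]_(a | isSome (bp B q a)) bellE W q a.
Proof.
apply/le_anti; rewrite FP2 andbT; apply: le_bigmin; first exact: leey.
by move=> a Ha; exact: FP1.
Qed.

Lemma astar_ex q : exists a, isSome (bp B q a) && (bellE W q a <= W q).
Proof.
case/bigmin_leP: (FP2 q) => [Hy | [a Ha Hle]].
  by exists (a0 q); rewrite a0P /=; apply: le_trans (leey _) Hy.
by exists a; rewrite Ha.
Qed.

Definition astar q := xchoose (astar_ex q).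
Lemma astarP q : isSome (bp B q (astar q)) && (bellE W q (astar q) <= W q).
Proof. exact: (xchooseP (astar_ex q)). Qed.


Local Close Scope ereal_scope.

Fixpoint nn (d : nat) : nat := match d with 0 => 0%N | d'.+1 => (bmax * nn d').+1 end.

Definition Kk (k : nat) : R := c0 + \sum_(q : T) Wk k q.
Definition Phi (l : seq (T * nat)) : R := \sum_(x <- l) Wk x.2 x.1.
Definition Cc (l : seq (T * nat)) : R := \sum_(x <- l) (nn x.2)%:R.
Definition gN (k N : nat) (l : seq (T * nat)) : R :=
  Phi l - Order.max 0 (Kk k * Cc l - N%:R * c0).
Definition lrep (l : seq (T * nat)) (i : nat) (s : seq (T * nat)) :=
  take i l ++ s ++ drop i.+1 l.

Lemma sum_replace (F : T * nat -> R) l i s x0 : (i < size l)%N ->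
  \sum_(y <- lrep l i s) F y = \sum_(y <- l) F y - F (nth x0 l i) + \sum_(y <- s) F y.
Proof.
move=> Hi; rewrite -{2}(cat_take_drop i l) (drop_nth x0) // /lrep !big_cat big_cons /=.
lra.
Qed.

Lemma sum_cst (b : seq T) (c : R) : \sum_(y <- b) c = (size b)%:R * c.
Proof.
elim: b => [|y b IH]; rewrite ?big_nil ?big_cons ?IH /= ?mul0r //.
by rewrite -add1n natrD mulrDl mul1r.
Qed.

Lemma maxlem (X c c' : R) : 0 <= c' -> c' <= c ->
  Order.max 0 X <= c + Order.max 0 (X - c').
Proof.
move=> h1 h2; rewrite ge_max; apply/andP; split.
  by apply: addr_ge0; [lra | rewrite le_max lexx].
by apply: (@le_trans _ _ (c + (X - c'))); [lra | rewrite lerD2l le_max lexx orbT].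
Qed.

Lemma Kk_ge_c0 k : c0 <= Kk k.
Proof. by rewrite /Kk lerDl; apply: sumr_ge0 => q _; exact: Wk_ge0. Qed.

Lemma Wk_le_K k d q : (d <= k)%N -> Wk d q <= Kk k * (nn d)%:R.
Proof.
case: d => [|d] Hd; first by rewrite /= mulr0.
have Kge := Kk_ge_c0 k; have c0p := c0_gt0.
apply: (@le_trans _ _ (Kk k)).
  apply: (le_trans (Wk_mono q Hd)).
  rewrite /Kk (bigD1 q) //= addrCA lerDl addr_ge0 ?(ltW c0p) //.
  by apply: sumr_ge0 => x _; exact: Wk_ge0.
rewrite ler_peMr ?(le_trans (ltW c0p)) //= -addn1 natrD lerDr.
by rewrite ler0n.
Qed.

Lemma key k N l i x0 a d : (i < size l)%N ->
  bp B (nth x0 l i).1 a = Some d ->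
  gN k N.+1 l <= bc B (nth x0 l i).1 a +
    \sum_(b <- fd_supp d) fd_w d b * gN k N (lrep l i [seq (y, (nth x0 l i).2.-1) | y <- b]).
Proof.
move=> Hi E.
set q := (nth x0 l i).1 in E *; set dl := (nth x0 l i).2.
have Phi_rep b : Phi (lrep l i [seq (y, dl.-1) | y <- b]) =
    Phi l - Wk dl q + \sum_(y <- b) Wk dl.-1 y.
  by rewrite /Phi (sum_replace _ _ x0 Hi) big_map.
have Cc_rep b : Cc (lrep l i [seq (y, dl.-1) | y <- b]) =
    Cc l - (nn dl)%:R + (size b)%:R * (nn dl.-1)%:R.
  by rewrite /Cc (sum_replace _ _ x0 Hi) big_map sum_cst.
have sw := fd_sum1 d.
have Kge := Kk_ge_c0 k; have c0p := c0_gt0.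
have bcq := c0_le q a.
case Hdl: dl Phi_rep Cc_rep => [|d'] Phi_rep Cc_rep.
- have HH b : gN k N (lrep l i [seq (y, 0.-1) | y <- b]) = gN k N l.
    rewrite /gN Phi_rep Cc_rep /= big1_eq mulr0 !subr0 !addr0.
    done.
  under eq_bigr do rewrite HH.
  rewrite -big_distrl /= sw /gN.
  have := maxlem (Kk k * Cc l - N%:R * c0) (ltW c0p) bcq.
  have -> : Kk k * Cc l - N.+1%:R * c0 = (Kk k * Cc l - N%:R * c0) - c0.
    rewrite -natr1; lra.
  lra.
- set M := Order.max 0 (Kk k * Cc l - N.+1%:R * c0).
  apply: (@le_trans _ _ (bc B q a + \sum_(b <- fd_supp d)
       fd_w d b * (Phi l - Wk dl q - M + \sum_(y <- b) Wk d' y))); last first.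
    rewrite lerD2l !big_seq; apply: ler_sum => b Hb; apply: ler_wpM2l; first exact: fd_ge0.
    rewrite /gN Phi_rep Cc_rep [d'.+1.-1]/=.
    suff : Order.max 0 (Kk k * (Cc l - (nn d'.+1)%:R + (size b)%:R * (nn d')%:R) - N%:R * c0) <= M.
      rewrite Hdl; lra.
    rewrite ge_max; apply/andP; split; first by rewrite /M le_max lexx.
    rewrite /M le_max; apply/orP; right.
    have hs : (size b)%:R <= bmax%:R :> R by rewrite ler_nat (size_le_bmax E Hb).
    have hn : 0 <= (nn d')%:R :> R by rewrite ler0n.
    have hs' : 0 <= bmax%:R - (size b)%:R :> R by rewrite subr_ge0.
    have h := mulr_ge0 (le_trans (ltW c0p) Kge) (mulr_ge0 hs' hn).
    rewrite [nn d'.+1]/= -natr1 natrM.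
    nra.
  rewrite (eq_bigr (fun b => fd_w d b * (Phi l - Wk dl q - M) +
                              fd_w d b * \sum_(y <- b) Wk d' y)); last first.
    by move=> b _; rewrite mulrDr.
  rewrite big_split /= -big_distrl sw /= mul1r.
  move: (@Wk_le_bell d' q a); rewrite /bellF E => /(_ isT) Hb.
  rewrite /gN -/M Hdl; lra.
Qed.

Lemma map_fst_lrep l i b (d : nat) :
  map fst (lrep l i [seq (y, d) | y <- b]) = replace_at (map fst l) i b.
Proof.
rewrite /lrep /replace_at !map_cat map_take map_drop; congr (_ ++ (_ ++ _)).
by elim: b => //= y b ->.
Qed.

Lemma last_extend (h : hist T Act) (m : mact Act) (b : seq T) : last_state (extend h m b) = b.
Proof. by rewrite /last_state /extend /= map_rcons last_rcons. Qed.

Lemma nth_fst (l : seq (T * nat)) al j z :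
  map fst l = al -> (j < size al)%N -> (nth (z, 0%N) l j).1 = nth z al j.
Proof.
move=> <- Hj; rewrite (nth_map (z, 0%N)) //; by rewrite size_map in Hj.
Qed.

Lemma elt_nth (al : seq T) (i : 'I_(size al)) z : elt i = nth z al i.
Proof. by rewrite /elt (tnth_nth z). Qed.

Lemma lrep_labels k l i x0 b : (i < size l)%N -> (forall x, x \in l -> (x.2 <= k)%N) ->
  forall x, x \in lrep l i [seq (y, (nth x0 l i).2.-1) | y <- b] -> (x.2 <= k)%N.
Proof.
move=> Hi Hk x; rewrite /lrep !mem_cat => /or3P [H|H|H].
- by apply: Hk; exact: mem_take H.
- case/mapP: H => y _ -> /=; apply: leq_trans (leq_pred _) _; apply: Hk; exact: mem_nth.
- by apply: Hk; exact: mem_drop H.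
Qed.

Lemma Phi_le k l : (forall x, x \in l -> (x.2 <= k)%N) -> Phi l <= Kk k * Cc l.
Proof.
move=> Hk; rewrite /Phi /Cc mulr_sumr !big_seq; apply: ler_sum => x Hx.
exact: Wk_le_K (Hk x Hx).
Qed.

Lemma lower sigma k : is_strategy B sigma -> forall N h l,
  map fst l = last_state h -> (forall x, x \in l -> (x.2 <= k)%N) ->
  gN k N l <= ETotN B N sigma h.
Proof.
move=> Hs; elim=> [|N IH] h l Hl Hk.
  rewrite /= /gN mul0r subr0; have := Phi_le Hk.
  have : Kk k * Cc l <= Order.max 0 (Kk k * Cc l) by rewrite le_max lexx orbT.
  lra.
case: (boolP (last_state h == [::])) => Hne.
  have l0 : l = [::] by apply/eqP; rewrite -size_eq0 -(size_map fst) Hl size_eq0.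
  have -> : ETotN B N.+1 sigma h = 0.
    rewrite /=; apply: big1 => -[j Hj] _; exfalso.
    by rewrite (eqP Hne) in Hj.
  by rewrite l0 /gN /Phi big_nil sub0r oppr_le0 le_max lexx.
have S1 := Hs.2.2 h Hne.
rewrite -[gN k N.+1 l]mulr1 -S1 mulr_sumr /=; apply: ler_sum => i _.
rewrite mulr_sumr [X in X <= _]big_mkcond /=; apply: ler_sum => a _.
case E: (bp B (elt i) a) => [d|] //=.
rewrite mulrC; apply: ler_wpM2l; first exact: Hs.1.
have Hi : (i < size l)%N by rewrite -(size_map fst) Hl.
have Hq : (nth (elt i, 0%N) l i).1 = elt i.
  by rewrite (nth_fst _ Hl (ltn_ord i)) -elt_nth.
rewrite -Hq in E; apply: le_trans (key k N _ E) _ => //.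
rewrite Hq lerD2l; apply: ler_sum => b _; apply: ler_wpM2l; first exact: fd_ge0.
apply: IH; first by rewrite last_extend map_fst_lrep Hl.
exact: lrep_labels.
Qed.

Local Open Scope ereal_scope.

Lemma Psi_lower sigma (al : seq T) k : is_strategy B sigma ->
  (\sum_(x <- al) Wk k x)%:E <= ETotal_star_strat B al sigma.
Proof.
move=> Hs.
pose l := [seq (x, k) | x <- al].
have Hl : map fst l = last_state ((al, [::]) : hist T Act).
  by rewrite /l -map_comp map_id.
have Hk : forall x, x \in l -> (x.2 <= k)%N by move=> x /mapP [y _ ->].
pose N := (Num.Def.trunc (Kk k * Cc l / c0)).+1.
have HX : (Kk k * Cc l - N%:R * c0 <= 0)%R.
  rewrite subr_le0; apply: ltW; rewrite -ltr_pdivrMr ?c0_gt0 //.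
  exact: truncnS_gt.
have M0 : Order.max 0%R (Kk k * Cc l - N%:R * c0)%R = 0%R.
  by apply/le_anti; rewrite ge_max lexx HX le_max lexx.
have Hg := lower Hs N Hl Hk.
rewrite /gN M0 subr0 /Phi /l big_map /= in Hg.
apply: (le_trans (_ : _ <= (ETotal_N B N al sigma)%:E)); first by rewrite lee_fin.
by apply: ereal_sup_ubound; exists N.
Qed.

Lemma sumW_sup (al : seq T) :
  \sum_(x <- al) W x = ereal_sup (range (fun k => (\sum_(x <- al) Wk k x)%:E)).
Proof.
symmetry; apply: sup_cvg.
  move=> n m nm; rewrite lee_fin; apply: ler_sum => x _; exact: Wk_mono.
under eq_fun do rewrite -sumEFin.
apply: cvg_nnesum.
  by move=> x _; apply: nearW => k; rewrite lee_fin; exact: Wk_ge0.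
by move=> x _; exact: Wk_cvg.
Qed.

Lemma V_ge (al : seq T) : \sum_(x <- al) W x <= ETotal_star B al.
Proof.
apply: le_ereal_inf_tmp => _ [sigma Hs <-].
rewrite sumW_sup; apply: ge_ereal_sup => _ [k _ <-].
exact: Psi_lower.
Qed.

Definition sg (h : hist T Act) (m : mact Act) : R :=
  match last_state h with
  | [::] => 0%R
  | q :: _ => if m == (0%N, astar q) then 1%R else 0%R
  end.

Lemma elt0 (q : T) (t : seq T) : elt (@Ordinal (size (q :: t)) 0 isT) = q.
Proof. by rewrite /elt (tnth_nth q). Qed.

Lemma elt_ord0 (q : T) (t : seq T) : elt (ord0 : 'I_(size (q :: t))) = q.
Proof. by rewrite /elt (tnth_nth q). Qed.

Lemma astar_some q : exists d, bp B q (astar q) = Some d.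
Proof.
case/andP: (astarP q); case: (bp B q (astar q)) => // d _ _; by exists d.
Qed.

Lemma sg_strat : is_strategy B sg.
Proof.
split; [|split].
- by move=> h m; rewrite /sg; case: (last_state h) => // q _; case: ifP.
- move=> h m H; rewrite /sg; move: H; case E: (last_state h) => [|q t] // H.
  case: eqP => // Hm; exfalso; apply: H; rewrite Hm.
  exists (@Ordinal (size (q :: t)) 0 isT); split => //=.
  by rewrite elt0; case/andP: (astarP q).
- move=> h; rewrite /sg; case E: (last_state h) => [|q t] // _.
  rewrite big_ord_recl [X in (_ + X)%R]big1 ?addr0; last first.
    by move=> i _; apply: big1 => a _.
  rewrite elt_ord0 (bigD1 (astar q)) /=; last by case/andP: (astarP q).
  rewrite eqxx big1 ?addr0 // => a /andP [_ Ha].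
  by rewrite xpair_eqE /= (negbTE Ha).
Qed.

Lemma upper N : forall h, (ETotN B N sg h)%:E <= \sum_(x <- last_state h) W x.
Proof.
elim: N => [|N IH] h.
  by rewrite /=; apply: sume_ge0 => x _; exact: W_ge0.
rewrite /=; case E: (last_state h) => [|q t].
  by rewrite big_ord0 big_nil.
rewrite big_ord_recl [X in (_ + X)%R]big1 ?addr0; last first.
  move=> i _; apply: big1 => a _.
  by case: (bp B _ a) => // d; rewrite /sg E /= mul0r.
rewrite elt_ord0 (bigD1 (astar q)) //= [X in (_ + X)%R]big1 ?addr0; last first.
  move=> a Ha; case: (bp B q a) => // d.
  by rewrite /sg E xpair_eqE /= (negbTE Ha) mul0r.
have [d Ed] := astar_some q.
rewrite Ed /sg E eqxx mul1r.
apply: (@le_trans _ _ (bellE W q (astar q) + \sum_(x <- t) W x)); last first.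
  by rewrite big_cons leeD2r //; case/andP: (astarP q).
rewrite /bellE Ed EFinD -sumEFin -addeA leeD2l //.
have -> : \sum_(x <- t) W x = (\sum_(b <- fd_supp d) (fd_w d b)%:E) * \sum_(x <- t) W x.
  by rewrite sumEFin fd_sum1 mul1e.
rewrite ge0_sume_distrl; last first.
  by move=> b _; rewrite lee_fin; exact: fd_ge0.
rewrite -big_split /=; apply: lee_sum => b _.
rewrite EFinM -ge0_muleDr; last first.
- by apply: sume_ge0 => x _; exact: W_ge0.
- by apply: sume_ge0 => x _; exact: W_ge0.
apply: lee_wpmul2l; first by rewrite lee_fin; exact: fd_ge0.
have := IH (extend h (0%N, astar q) (replace_at (q :: t) 0 b)).
rewrite last_extend /replace_at /= drop0 big_cat; exact.
Qed.

Lemma V_le (al : seq T) : ETotal_star B al <= \sum_(x <- al) W x.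
Proof.
apply: (le_trans (ereal_inf_lbound _)).
  by exists sg; [exact: sg_strat | reflexivity].
apply: ge_ereal_sup => _ [N _ <-].
exact: (upper N (al, [::])).
Qed.

Lemma V_eq (al : seq T) : ETotal_star B al = \sum_(x <- al) W x.
Proof. by apply/le_anti; rewrite V_le V_ge. Qed.

End Proof.

Local Open Scope ereal_scope.

Lemma sum_elt (R : realType) (T : finType) (F : T -> \bar R) (al : seq T) :
  \sum_(i < size al) F (elt i) = \sum_(x <- al) F x.
Proof. by rewrite (big_tuple _ _ (in_tuple al)). Qed.

Theorem mainTheorem2 (R : realType) (T Act : finType) (B : BMDP R T Act) :
  (forall alpha : seq T,
     ETotal_star B alpha = (\sum_(i < size alpha) ETotal_star B [:: elt i])%E) /\
  (forall q : T,
     ETotal_star B [:: q] =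
       \big[Order.min/+oo%E]_(a : Act | isSome (bp B q a)) bellman_val B q a).
Proof.
have V1 : forall x : T, ETotal_star B [:: x] = W B x.
  by move=> x; rewrite V_eq big_seq1.
split.
- move=> alpha; rewrite V_eq.
  under [RHS]eq_bigr do rewrite V1.
  by rewrite sum_elt.
- move=> q; rewrite V1 W_fix; apply: eq_bigr => a _.
  rewrite /bellE /bellman_val; case: (bp B q a) => // d.
  congr (_ + _); apply: eq_bigr => b _; congr (_ * _).
  under [RHS]eq_bigr do rewrite V1.
  by rewrite sum_elt.
Qed.
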